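(* Let $U\colon[0,1]^2\to[0,1]$ be a uninorm with neutral element $e\in(0,1)$, $U\in\mathcal U$, and let $a<b$ be idempotent elements of $U$ such that there is no idempotent element of $U$ in $(a,b)$. If there exist $y\in[0,1]$ and $x_1,x_2\in(a,b)$ with $x_1<x_2$ such that $u_{x_1}$ and $u_{x_2}$ are both non-continuous at $y$, then $U$ is pseudo-internal on $[a,b]\times[0,1]$, i.e. $U(x,z)\in\{x,z\}$ for all $(x,z)\in [a,b]\times[0,1]$ with $(x,z)\in[0,e]\times[e,1]\cup[e,1]\times[0,e]$.
   Context: A uninorm is a commutative, associative binary operation on $[0,1]$, non-decreasing in each variable, with a neutral element $e$. Underlying t-norm $T_U(x,y)=U(ex,ey)/e$, underlying t-conorm $C_U(x,y)=(U(e+(1-e)x,e+(1-e)y)-e)/(1-e)$; $\mathcal U$ is the class of uninorms for which both are continuous. For $x\in[0,1]$, $u_x(z)=U(x,z)$. An idempotent element is $x$ with $U(x,x)=x$. $U$ is pseudo-internal (on a set) if it is internal, i.e. $U(x,z)\in\{x,z\}$, at all points of that set lying in $[0,e]\times[e,1]\cup[e,1]\times[0,e]$. *)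

(* Defs.v *)
From Stdlib Require Export Reals Lra.
Open Scope R_scope.

Definition I01 (x : R) : Prop := 0 <= x <= 1.

(* A uninorm on [0,1] with neutral element e. Only values on [0,1]^2 matter. *)
Definition uninorm (U : R -> R -> R) (e : R) : Prop :=
  I01 e /\
  (forall x y, I01 x -> I01 y -> I01 (U x y)) /\
  (forall x y, I01 x -> I01 y -> U x y = U y x) /\
  (forall x y z, I01 x -> I01 y -> I01 z -> U x (U y z) = U (U x y) z) /\
  (forall x1 x2 y, I01 x1 -> I01 x2 -> I01 y -> x1 <= x2 -> U x1 y <= U x2 y) /\
  (forall x, I01 x -> U e x = x).

(* Underlying t-norm and t-conorm (meaningful for 0 < e < 1). *)
Definition T_U (U : R -> R -> R) (e : R) (x y : R) : R := U (e * x) (e * y) / e.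
Definition C_U (U : R -> R -> R) (e : R) (x y : R) : R :=
  (U (e + (1 - e) * x) (e + (1 - e) * y) - e) / (1 - e).

Definition continuous_on_unit_square (f : R -> R -> R) : Prop :=
  forall x y, I01 x -> I01 y ->
  forall eps, 0 < eps -> exists delta, 0 < delta /\
    forall x' y', I01 x' -> I01 y' -> Rabs (x' - x) < delta -> Rabs (y' - y) < delta ->
      Rabs (f x' y' - f x y) < eps.

Definition in_class_U (U : R -> R -> R) (e : R) : Prop :=
  continuous_on_unit_square (T_U U e) /\ continuous_on_unit_square (C_U U e).

Definition idempotent (U : R -> R -> R) (x : R) : Prop := I01 x /\ U x x = x.

(* u_x = U x, viewed as a function on [0,1]; continuity at y relative to [0,1]. *)
Definition sec_continuous_at (U : R -> R -> R) (x y : R) : Prop :=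
  limit1_in (U x) I01 (U x y) y.

(* Main.v *)
Require Import Defs.
From Stdlib Require Import Reals Lra Classical.
Open Scope R_scope.

Definition rcont (f : R -> R) (lo hi : R) : Prop :=
  forall s, lo <= s <= hi -> forall eps, 0 < eps -> exists d, 0 < d /\
    forall t, lo <= t <= hi -> Rabs (t - s) < d -> Rabs (f t - f s) < eps.

Definition rmono (f : R -> R) (lo hi : R) : Prop :=
  forall s t, lo <= s -> s <= t -> t <= hi -> f s <= f t.

Lemma rabs_lt_i x d : -d < x < d -> Rabs x < d.
Proof. intros [H1 H2]; apply Rabs_def1; lra. Qed.
Lemma rabs_lt_e x d : Rabs x < d -> -d < x < d.
Proof. intro H; apply Rabs_def2 in H; lra. Qed.

Lemma level_max f lo hi v : lo < hi -> rmono f lo hi -> rcont f lo hi ->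
  f lo <= v -> v < f hi ->
  exists c, lo <= c < hi /\ f c = v /\ (forall s, c < s <= hi -> v < f s).
Proof.
  intros Hlh Hm Hc Hlo Hhi.
  set (E := fun s => lo <= s <= hi /\ f s <= v).
  assert (Hb : bound E) by (exists hi; intros s [Hs _]; lra).
  assert (Hne : exists s, E s) by (exists lo; split; [lra|exact Hlo]).
  destruct (completeness E Hb Hne) as [c [Hub Hleast]].
  assert (Hcl : lo <= c) by (apply Hub; split; [lra|exact Hlo]).
  assert (Hch : c <= hi) by (apply Hleast; intros s [Hs _]; lra).
  assert (Hfc : f c = v).
  { destruct (Rtotal_order (f c) v) as [Hlt|[Heq|Hgt]]; auto.
    - exfalso. destruct (Hc c (conj Hcl Hch) (v - f c)) as [d [Hd Hd']]; [lra|].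
      destruct (Req_dec c hi) as [Eh|Eh].
      + subst c. lra.
      + set (t := Rmin (c + d/2) hi).
        assert (Ht1 : c < t) by (unfold t; apply Rmin_glb_lt; lra).
        assert (Ht2 : t <= hi) by (unfold t; apply Rmin_r).
        assert (Ht3 : t <= c + d/2) by (unfold t; apply Rmin_l).
        assert (HE : E t).
        { split; [lra|]. specialize (Hd' t ltac:(lra) ltac:(apply rabs_lt_i; lra)).
          apply rabs_lt_e in Hd'. lra. }
        specialize (Hub t HE). lra.
    - exfalso. destruct (Hc c (conj Hcl Hch) (f c - v)) as [d [Hd Hd']]; [lra|].
      assert (Hnub : ~ is_upper_bound E (c - d/2)).
      { intro H. specialize (Hleast _ H). lra. }
      apply not_all_ex_not in Hnub. destruct Hnub as [s Hs].
      apply imply_to_and in Hs. destruct Hs as [[Hs1 Hs2] Hs3].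
      assert (Hsc : s <= c) by (apply Hub; split; assumption).
      destruct (Rle_dec (c - d) s) as [Hcs|Hcs].
      + specialize (Hd' s ltac:(lra) ltac:(apply rabs_lt_i; lra)). apply rabs_lt_e in Hd'. lra.
      + lra. }
  exists c. split; [split; [exact Hcl|]|split; [exact Hfc|]].
  - destruct (Req_dec c hi); [subst; lra|lra].
  - intros s [Hs1 Hs2]. destruct (Rle_dec (f s) v) as [H|H]; [|lra].
    assert (E s) by (split; [lra|exact H]). specialize (Hub s H0). lra.
Qed.

Lemma level_min f lo hi v : lo < hi -> rmono f lo hi -> rcont f lo hi ->
  f lo < v -> v <= f hi ->
  exists c, lo < c <= hi /\ f c = v /\ (forall s, lo <= s < c -> f s < v).
Proof.
  intros Hlh Hm Hc Hlo Hhi.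
  set (E := fun s => lo <= s <= hi /\ f s < v).
  assert (Hb : bound E) by (exists hi; intros s [Hs _]; lra).
  assert (Hne : exists s, E s) by (exists lo; split; [lra|exact Hlo]).
  destruct (completeness E Hb Hne) as [c [Hub Hleast]].
  assert (Hcl : lo <= c) by (apply Hub; split; [lra|exact Hlo]).
  assert (Hch : c <= hi) by (apply Hleast; intros s [Hs _]; lra).
  assert (Hfc : f c = v).
  { destruct (Rtotal_order (f c) v) as [Hlt|[Heq|Hgt]]; auto.
    - exfalso. destruct (Hc c (conj Hcl Hch) (v - f c)) as [d [Hd Hd']]; [lra|].
      destruct (Req_dec c hi) as [Eh|Eh].
      + subst c. lra.
      + set (t := Rmin (c + d/2) hi).
        assert (Ht1 : c < t) by (unfold t; apply Rmin_glb_lt; lra).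
        assert (Ht2 : t <= hi) by (unfold t; apply Rmin_r).
        assert (Ht3 : t <= c + d/2) by (unfold t; apply Rmin_l).
        assert (HE : E t).
        { split; [lra|]. specialize (Hd' t ltac:(lra) ltac:(apply rabs_lt_i; lra)).
          apply rabs_lt_e in Hd'. lra. }
        specialize (Hub t HE). lra.
    - exfalso. destruct (Hc c (conj Hcl Hch) (f c - v)) as [d [Hd Hd']]; [lra|].
      assert (Hnub : ~ is_upper_bound E (c - d/2)).
      { intro H. specialize (Hleast _ H). lra. }
      apply not_all_ex_not in Hnub. destruct Hnub as [s Hs].
      apply imply_to_and in Hs. destruct Hs as [[Hs1 Hs2] Hs3].
      assert (Hsc : s <= c) by (apply Hub; split; assumption).
      destruct (Rle_dec (c - d) s) as [Hcs|Hcs].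
      + specialize (Hd' s ltac:(lra) ltac:(apply rabs_lt_i; lra)). apply rabs_lt_e in Hd'. lra.
      + lra. }
  exists c. split; [split; [|exact Hch]|split; [exact Hfc|]].
  - destruct (Req_dec c lo); [subst; lra|lra].
  - intros s [Hs1 Hs2].
    assert (Hnub : ~ is_upper_bound E s).
    { intro H. specialize (Hleast _ H). lra. }
    apply not_all_ex_not in Hnub. destruct Hnub as [s' Hs'].
    apply imply_to_and in Hs'. destruct Hs' as [[Hs'1 Hs'2] Hs'3].
    assert (f s <= f s') by (apply Hm; lra). lra.
Qed.

Lemma ivt f lo hi v : lo <= hi -> rmono f lo hi -> rcont f lo hi ->
  f lo <= v -> v <= f hi -> exists c, lo <= c <= hi /\ f c = v.
Proof.
  intros Hlh Hm Hc Hlo Hhi.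
  destruct (Req_dec v (f hi)) as [E|E].
  - exists hi; split; [lra|auto].
  - destruct (Req_dec lo hi) as [E2|E2].
    + subst. exists hi. split; lra.
    + destruct (level_max f lo hi v) as [c [Hc1 [Hc2 _]]]; try lra; auto.
      exists c; split; [lra|auto].
Qed.

Section S.
Variable U : R -> R -> R.
Variable e : R.
Hypothesis He : 0 < e < 1.
Hypothesis Hu : uninorm U e.
Hypothesis Hc : in_class_U U e.

Lemma UI x y : 0 <= x <= 1 -> 0 <= y <= 1 -> 0 <= U x y <= 1.
Proof. intros. destruct Hu as [_ [HH _]]. apply HH; assumption. Qed.
Lemma Ucom x y : 0 <= x <= 1 -> 0 <= y <= 1 -> U x y = U y x.
Proof. intros. destruct Hu as [_ [_ [HH _]]]. apply HH; assumption. Qed.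
Lemma Uass x y z : 0 <= x <= 1 -> 0 <= y <= 1 -> 0 <= z <= 1 -> U x (U y z) = U (U x y) z.
Proof. intros. destruct Hu as [_ [_ [_ [HH _]]]]. apply HH; assumption. Qed.
Lemma Um1 x1 x2 y : 0 <= x1 <= 1 -> 0 <= x2 <= 1 -> 0 <= y <= 1 -> x1 <= x2 -> U x1 y <= U x2 y.
Proof. intros. destruct Hu as [_ [_ [_ [_ [HH _]]]]]. apply HH; assumption. Qed.
Lemma Um2 x y1 y2 : 0 <= x <= 1 -> 0 <= y1 <= 1 -> 0 <= y2 <= 1 -> y1 <= y2 -> U x y1 <= U x y2.
Proof. intros. rewrite (Ucom x y1), (Ucom x y2) by assumption. apply Um1; assumption. Qed.
Lemma Uel x : 0 <= x <= 1 -> U e x = x.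
Proof. intros. destruct Hu as [_ [_ [_ [_ [_ HH]]]]]. apply HH; assumption. Qed.
Lemma Uer x : 0 <= x <= 1 -> U x e = x.
Proof. intros. rewrite Ucom by lra. apply Uel; lra. Qed.

Lemma Ule x y : 0 <= x <= e -> 0 <= y <= 1 -> U x y <= y.
Proof. intros. rewrite <- (Uel y) at 2 by assumption. apply Um1; lra. Qed.
Lemma Uge x y : e <= x <= 1 -> 0 <= y <= 1 -> y <= U x y.
Proof. intros. rewrite <- (Uel y) at 1 by assumption. apply Um1; lra. Qed.
Lemma Ule' x y : 0 <= x <= 1 -> 0 <= y <= e -> U x y <= x.
Proof. intros. rewrite Ucom by lra. apply Ule; lra. Qed.
Lemma Uge' x y : 0 <= x <= 1 -> e <= y <= 1 -> x <= U x y.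
Proof. intros. rewrite Ucom by lra. apply Uge; lra. Qed.

Lemma Tcont p q : 0 <= p <= e -> 0 <= q <= e -> forall eps, 0 < eps -> exists d, 0 < d /\
  forall p' q', 0 <= p' <= e -> 0 <= q' <= e -> Rabs (p' - p) < d -> Rabs (q' - q) < d ->
  Rabs (U p' q' - U p q) < eps.
Proof.
  intros Hp Hq eps Heps.
  destruct Hc as [HT _].
  assert (HI : forall r, 0 <= r <= e -> I01 (r / e) /\ e * (r / e) = r).
  { intros r Hr. assert (E : e * (r / e) = r) by (field; lra).
    split; [|exact E]. set (R0 := r / e) in *. unfold I01. split; nra. }
  destruct (HI p Hp) as [Ip Ep]. destruct (HI q Hq) as [Iq Eq].
  destruct (HT (p/e) (q/e) Ip Iq (eps / e)) as [d [Hd Hd']].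
  { apply Rdiv_lt_0_compat; lra. }
  exists (d * e). split; [nra|].
  intros p' q' Hp' Hq' H1 H2.
  destruct (HI p' Hp') as [Ip' Ep']. destruct (HI q' Hq') as [Iq' Eq'].
  assert (Hx : Rabs (p'/e - p/e) < d).
  { apply rabs_lt_e in H1. apply rabs_lt_i.
    set (A := p'/e) in *. set (B := p/e) in *. rewrite <- Ep, <- Ep' in H1. split; nra. }
  assert (Hy : Rabs (q'/e - q/e) < d).
  { apply rabs_lt_e in H2. apply rabs_lt_i.
    set (A := q'/e) in *. set (B := q/e) in *. rewrite <- Eq, <- Eq' in H2. split; nra. }
  specialize (Hd' _ _ Ip' Iq' Hx Hy). unfold T_U in Hd'.
  rewrite Ep, Eq, Ep', Eq' in Hd'.
  apply rabs_lt_e in Hd'. apply rabs_lt_i.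
  assert (E1 : U p' q' = e * (U p' q' / e)) by (field; lra).
  assert (E2 : U p q = e * (U p q / e)) by (field; lra).
  assert (E3 : eps = e * (eps / e)) by (field; lra).
  set (A := U p' q' / e) in *. set (B := U p q / e) in *. set (k := eps / e) in *.
  rewrite E1, E2, E3. split; nra.
Qed.

Lemma Ccont p q : e <= p <= 1 -> e <= q <= 1 -> forall eps, 0 < eps -> exists d, 0 < d /\
  forall p' q', e <= p' <= 1 -> e <= q' <= 1 -> Rabs (p' - p) < d -> Rabs (q' - q) < d ->
  Rabs (U p' q' - U p q) < eps.
Proof.
  intros Hp Hq eps Heps.
  destruct Hc as [_ HC].
  assert (HI : forall r, e <= r <= 1 -> I01 ((r - e) / (1 - e)) /\ e + (1 - e) * ((r - e) / (1 - e)) = r).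
  { intros r Hr. assert (E : e + (1 - e) * ((r - e) / (1 - e)) = r) by (field; lra).
    split; [|exact E]. set (R0 := (r - e) / (1 - e)) in *. unfold I01. split; nra. }
  destruct (HI p Hp) as [Ip Ep]. destruct (HI q Hq) as [Iq Eq].
  destruct (HC _ _ Ip Iq (eps / (1 - e))) as [d [Hd Hd']].
  { apply Rdiv_lt_0_compat; lra. }
  exists (d * (1 - e)). split; [nra|].
  intros p' q' Hp' Hq' H1 H2.
  destruct (HI p' Hp') as [Ip' Ep']. destruct (HI q' Hq') as [Iq' Eq'].
  assert (Hx : Rabs ((p' - e)/(1 - e) - (p - e)/(1 - e)) < d).
  { apply rabs_lt_e in H1. apply rabs_lt_i.
    set (A := (p' - e)/(1 - e)) in *. set (B := (p - e)/(1 - e)) in *. rewrite <- Ep, <- Ep' in H1. split; nra. }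
  assert (Hy : Rabs ((q' - e)/(1 - e) - (q - e)/(1 - e)) < d).
  { apply rabs_lt_e in H2. apply rabs_lt_i.
    set (A := (q' - e)/(1 - e)) in *. set (B := (q - e)/(1 - e)) in *. rewrite <- Eq, <- Eq' in H2. split; nra. }
  specialize (Hd' _ _ Ip' Iq' Hx Hy). unfold C_U in Hd'.
  rewrite Ep, Eq, Ep', Eq' in Hd'.
  apply rabs_lt_e in Hd'. apply rabs_lt_i.
  assert (E1 : U p' q' = e + (1 - e) * ((U p' q' - e) / (1 - e))) by (field; lra).
  assert (E2 : U p q = e + (1 - e) * ((U p q - e) / (1 - e))) by (field; lra).
  assert (E3 : eps = (1 - e) * (eps / (1 - e))) by (field; lra).
  set (A := (U p' q' - e) / (1 - e)) in *. set (B := (U p q - e) / (1 - e)) in *. set (k := eps / (1 - e)) in *.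
  rewrite E1, E2, E3. split; nra.
Qed.


Lemma rcT q : 0 <= q <= e -> rcont (U q) 0 e.
Proof.
  intros Hq s Hs eps Heps. destruct (Tcont q s Hq Hs eps Heps) as [d [Hd H]].
  exists d; split; auto. intros t Ht Hts. apply H; auto. rewrite Rminus_diag, Rabs_R0; lra.
Qed.
Lemma rcC q : e <= q <= 1 -> rcont (U q) e 1.
Proof.
  intros Hq s Hs eps Heps. destruct (Ccont q s Hq Hs eps Heps) as [d [Hd H]].
  exists d; split; auto. intros t Ht Hts. apply H; auto. rewrite Rminus_diag, Rabs_R0; lra.
Qed.
Lemma rcC' q : e <= q <= 1 -> rcont (fun t => U t q) e 1.
Proof.
  intros Hq s Hs eps Heps. destruct (Ccont s q Hs Hq eps Heps) as [d [Hd H]].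
  exists d; split; auto. intros t Ht Hts. apply H; auto. rewrite Rminus_diag, Rabs_R0; lra.
Qed.
Lemma rmU q lo hi : 0 <= q <= 1 -> 0 <= lo -> hi <= 1 -> rmono (U q) lo hi.
Proof. intros Hq Hl Hh s t H1 H2 H3. apply Um2; lra. Qed.
Lemma rmU' q lo hi : 0 <= q <= 1 -> 0 <= lo -> hi <= 1 -> rmono (fun t => U t q) lo hi.
Proof. intros Hq Hl Hh s t H1 H2 H3. apply Um1; lra. Qed.

Lemma U1 q : e <= q <= 1 -> U q 1 = 1.
Proof. intros. pose proof (Uge q 1 H ltac:(lra)). pose proof (UI q 1 ltac:(lra) ltac:(lra)). lra. Qed.
Lemma U0 q : 0 <= q <= e -> U q 0 = 0.
Proof. intros. pose proof (Ule q 0 H ltac:(lra)). pose proof (UI q 0 ltac:(lra) ltac:(lra)). lra. Qed.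

Lemma Civt p v : e <= p <= 1 -> p <= v <= 1 -> exists t, e <= t <= 1 /\ U p t = v.
Proof.
  intros Hp Hv. destruct (ivt (U p) e 1 v) as [t [Ht Ht']]; try lra.
  - apply rmU; lra.
  - apply rcC; lra.
  - rewrite Uer; lra.
  - rewrite U1; lra.
  - exists t; auto.
Qed.

Lemma Tivt q lo hi v : 0 <= q <= e -> 0 <= lo <= hi -> hi <= e -> U q lo <= v <= U q hi ->
  exists r, lo <= r <= hi /\ U q r = v.
Proof.
  intros Hq Hl Hh Hv. destruct (ivt (U q) lo hi v) as [t [Ht Ht']]; try lra.
  - apply rmU; lra.
  - intros s Hs eps Heps. destruct (rcT q Hq s ltac:(lra) eps Heps) as [d [Hd H]].
    exists d; split; auto. intros t Ht Hts. apply H; auto; lra.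
  - exists t; auto.
Qed.

Lemma Cidem_max i p : e <= i <= 1 -> U i i = i -> i <= p <= 1 -> U i p = p.
Proof.
  intros Hi Hii Hp. destruct (Civt i p Hi Hp) as [t [Ht Ht']].
  rewrite <- Ht'. rewrite Uass by lra. rewrite Hii. reflexivity.
Qed.
Lemma Cidem_min i p : e <= i <= 1 -> U i i = i -> e <= p <= i -> U i p = i.
Proof.
  intros Hi Hii Hp. pose proof (Uge' i p ltac:(lra) ltac:(lra)).
  pose proof (Um2 i p i ltac:(lra) ltac:(lra) ltac:(lra) ltac:(lra)). lra.
Qed.
Lemma Tidem_min i p : 0 <= i <= e -> U i i = i -> i <= p <= e -> U i p = i.
Proof.
  intros Hi Hii Hp. pose proof (Ule' i p ltac:(lra) ltac:(lra)).
  pose proof (Um2 i i p ltac:(lra) ltac:(lra) ltac:(lra) ltac:(lra)). lra.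
Qed.
Lemma Tidem_max i p : 0 <= i <= e -> U i i = i -> 0 <= p <= i -> U i p = p.
Proof.
  intros Hi Hii Hp. destruct (Tivt i 0 i p Hi ltac:(lra) ltac:(lra)) as [r [Hr Hr']].
  { rewrite U0, Hii; lra. }
  rewrite <- Hr'. rewrite Uass by lra. rewrite Hii. reflexivity.
Qed.

Lemma Tidem_int i z : 0 <= i <= e -> U i i = i -> e <= z <= 1 -> U i z = i \/ U i z = z.
Proof.
  intros Hi Hii Hz. set (v := U i z).
  assert (Hv1 : i <= v) by (apply Uge'; lra).
  assert (Hv2 : v <= z) by (apply Ule; lra).
  assert (Hiv : U i v = v) by (unfold v; rewrite Uass, Hii by lra; reflexivity).
  destruct (Rle_dec v e) as [H|H].
  - left. pose proof (Ule' i v ltac:(lra) ltac:(lra)). fold v. lra.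
  - right. destruct (Civt v z ltac:(lra) ltac:(lra)) as [t [Ht Ht']].
    assert (E : U i (U v t) = U v t) by (rewrite Uass, Hiv by lra; reflexivity).
    rewrite Ht' in E. exact E.
Qed.


Lemma SMAX y : e <= y < 1 -> exists s, e <= s < 1 /\ U y s = y /\ U s s = s /\
  (forall s', s < s' <= 1 -> y < U y s').
Proof.
  intros Hy. destruct (level_max (U y) e 1 y) as [c [Hc1 [Hc2 Hc3]]]; try lra.
  - apply rmU; lra.
  - apply rcC; lra.
  - rewrite Uer; lra.
  - rewrite U1; lra.
  - exists c. split; [lra|split; [auto|split; [|auto]]].
    assert (H1 : c <= U c c) by (apply Uge; lra).
    assert (H2 : U c c <= 1) by (apply UI; lra).
    destruct (Req_dec (U c c) c) as [E|E]; auto. exfalso.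
    specialize (Hc3 (U c c) ltac:(lra)). rewrite Uass in Hc3 by lra. rewrite Hc2 in Hc3. lra.
Qed.


Lemma RC x y : 0 <= x <= e -> e <= y < 1 -> e <= U x y ->
  forall eps, 0 < eps -> exists d, 0 < d /\ forall t, y < t < y + d -> t <= 1 -> U x t < U x y + eps.
Proof.
  intros Hx Hy Hm eps Heps.
  destruct (SMAX y Hy) as [s [Hs [Hys [Hss Hgt]]]].
  set (m := U x y) in *.
  assert (Hm1 : m <= 1) by (apply UI; lra).
  assert (Hms : U m s = m) by (unfold m; rewrite <- Uass, Hys by lra; reflexivity).
  destruct (Ccont m s ltac:(lra) ltac:(lra) eps Heps) as [d' [Hd' Hc']].
  set (s1 := Rmin (s + d'/2) 1).
  assert (Hs1 : s < s1 /\ s1 <= 1 /\ s1 <= s + d'/2).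
  { unfold s1; split; [apply Rmin_glb_lt; lra|split; [apply Rmin_r|apply Rmin_l]]. }
  pose proof (Hgt s1 ltac:(lra)) as Hys1.
  exists (U y s1 - y). split; [lra|].
  intros t Ht Ht1.
  destruct (Civt y t ltac:(lra) ltac:(lra)) as [sg [Hsg Hsg']].
  assert (Hsg1 : sg <= s1).
  { destruct (Rle_dec sg s1) as [H|H]; auto. exfalso. apply Rnot_le_lt in H.
    pose proof (Um2 y s1 sg ltac:(lra) ltac:(lra) ltac:(lra) ltac:(lra)). lra. }
  assert (E : U x t = U m sg) by (rewrite <- Hsg'; unfold m; apply Uass; lra).
  rewrite E.
  assert (H1 : U m sg <= U m s1) by (apply Um2; lra).
  specialize (Hc' m s1 ltac:(lra) ltac:(lra) ltac:(rewrite Rminus_diag, Rabs_R0; lra) ltac:(apply rabs_lt_i; lra)).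
  apply rabs_lt_e in Hc'. rewrite Hms in Hc'. lra.
Qed.

Lemma LC x y z1 : 0 <= x <= e -> e < y <= 1 -> e <= z1 < y -> e <= U x z1 ->
  forall eps, 0 < eps -> exists d, 0 < d /\ forall t, y - d < t < y -> U x y - eps < U x t.
Proof.
  intros Hx Hy Hz Hp eps Heps.
  destruct (level_min (U z1) e 1 y) as [c [Hc1 [Hc2 Hc3]]]; try lra.
  - apply rmU; lra.
  - apply rcC; lra.
  - rewrite Uer; lra.
  - rewrite U1; lra.
  - set (p1 := U x z1) in *.
    assert (Hp1 : p1 <= 1) by (apply UI; lra).
    assert (Ey : U x y = U p1 c) by (rewrite <- Hc2; unfold p1; apply Uass; lra).
    destruct (Ccont p1 c ltac:(lra) ltac:(lra) eps Heps) as [d' [Hd' Hc']].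
    set (s2 := Rmax (c - d'/2) e).
    assert (Hs2 : e <= s2 /\ c - d'/2 <= s2 /\ s2 < c).
    { unfold s2; split; [apply Rmax_r|split; [apply Rmax_l|apply Rmax_lub_lt; lra]]. }
    pose proof (Hc3 s2 ltac:(lra)) as Ht2.
    assert (Ht2' : z1 <= U z1 s2) by (apply Uge'; lra).
    exists (y - U z1 s2). split; [lra|].
    intros t Ht.
    assert (H1 : U x (U z1 s2) <= U x t) by (apply Um2; lra).
    assert (E2 : U x (U z1 s2) = U p1 s2) by (unfold p1; apply Uass; lra).
    specialize (Hc' p1 s2 ltac:(lra) ltac:(lra) ltac:(rewrite Rminus_diag, Rabs_R0; lra) ltac:(apply rabs_lt_i; lra)).
    apply rabs_lt_e in Hc'. lra.
Qed.

Fixpoint pw (p : R) (n : nat) : R := match n with O => e | S k => U p (pw p k) end.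

Lemma pwI p n : 0 <= p <= 1 -> 0 <= pw p n <= 1.
Proof. intros Hp; induction n; simpl; [lra|apply UI; lra]. Qed.

Lemma pw_add p n m : 0 <= p <= 1 -> pw p (n + m) = U (pw p n) (pw p m).
Proof.
  intros Hp; induction n; simpl.
  - rewrite Uel; auto. apply pwI; auto.
  - rewrite IHn. apply Uass; auto; apply pwI; auto.
Qed.

Lemma pwC p n : e <= p <= 1 -> e <= pw p n <= 1.
Proof.
  intros Hp; induction n; simpl; [lra|]. split; [|apply UI; lra].
  pose proof (Uge p (pw p n) ltac:(lra) ltac:(lra)). lra.
Qed.
Lemma pwC_ge p n : e <= p <= 1 -> p <= pw p (S n).
Proof. intros Hp. simpl. apply Uge'; [lra|]. apply pwC; auto. Qed.
Lemma pwC_mon p n : e <= p <= 1 -> pw p n <= pw p (S n).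
Proof. intros Hp. simpl. apply Uge; [lra|]. pose proof (pwC p n Hp); lra. Qed.
Lemma pwT p n : 0 <= p <= e -> 0 <= pw p n <= e.
Proof.
  intros Hp; induction n; simpl; [lra|]. split; [apply UI; lra|].
  pose proof (Ule' p (pw p n) ltac:(lra) ltac:(lra)). lra.
Qed.
Lemma pw_monb p q n : 0 <= p -> p <= q -> q <= 1 -> pw p n <= pw q n.
Proof.
  intros H1 H2 H3; induction n; simpl; [lra|].
  pose proof (pwI p n ltac:(lra)). pose proof (pwI q n ltac:(lra)).
  apply Rle_trans with (U q (pw p n)); [apply Um1; lra|apply Um2; lra].
Qed.

Lemma PowCont p i : e <= p <= 1 -> e <= i <= 1 -> U p i = p ->
  forall N tau, p < tau -> exists eta, 0 < eta /\ forall s, e <= s <= 1 -> s <= i + eta -> U p (pw s N) < tau.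
Proof.
  intros Hp Hi Hpi N. induction N; intros tau Htau.
  - exists 1. split; [lra|]. intros s Hs Hs'. simpl. rewrite Uer; lra.
  - destruct (Ccont p i Hp Hi (tau - p) ltac:(lra)) as [d [Hd Hc']].
    destruct (IHN (p + d) ltac:(lra)) as [eta [Heta Heta']].
    exists (Rmin eta (d/2)). split; [apply Rmin_glb_lt; lra|].
    intros s Hs Hs'.
    assert (Hm1 : Rmin eta (d/2) <= eta) by apply Rmin_l.
    assert (Hm2 : Rmin eta (d/2) <= d/2) by apply Rmin_r.
    specialize (Heta' s Hs ltac:(lra)).
    pose proof (pwC s N Hs) as HpwN.
    simpl. rewrite (Ucom s (pw s N)) by lra. rewrite Uass by lra.
    set (q := U p (pw s N)) in *.
    assert (Hq : p <= q) by (apply Uge'; lra).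
    assert (Hq1 : q <= 1) by (apply UI; lra).
    set (s' := Rmax s i).
    assert (Hs'1 : i <= s' /\ s <= s' /\ s' <= 1 /\ s' <= i + d/2).
    { unfold s'. split; [apply Rmax_r|split; [apply Rmax_l|]].
      split; [apply Rmax_lub; lra|apply Rmax_lub; lra]. }
    specialize (Hc' q s' ltac:(lra) ltac:(lra) ltac:(apply rabs_lt_i; lra) ltac:(apply rabs_lt_i; lra)).
    apply rabs_lt_e in Hc'. rewrite Hpi in Hc'.
    pose proof (Um2 q s s' ltac:(lra) ltac:(lra) ltac:(lra) ltac:(lra)). lra.
Qed.

Lemma SupPow k : e <= k <= 1 -> exists i, e <= i <= 1 /\ U i i = i /\ (forall n, pw k n <= i) /\
  (forall u, (forall n, pw k n <= u) -> i <= u).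
Proof.
  intros Hk. set (E := fun v => exists n, v = pw k n).
  assert (Hb : bound E) by (exists 1; intros v [n ->]; apply pwI; lra).
  assert (Hne : exists v, E v) by (exists e, O; reflexivity).
  destruct (completeness E Hb Hne) as [i [Hub Hl]].
  assert (Hall : forall n, pw k n <= i) by (intro n; apply Hub; exists n; reflexivity).
  assert (Hi1 : e <= i) by (apply (Hall O)).
  assert (Hi2 : i <= 1) by (apply Hl; intros v [n ->]; apply pwI; lra).
  exists i. split; [lra|split; [|split; [exact Hall|]]].
  - pose proof (Uge i i ltac:(lra) ltac:(lra)).
    destruct (Req_dec (U i i) i) as [Eq|Ne]; auto. exfalso.
    destruct (Ccont i i ltac:(lra) ltac:(lra) (U i i - i) ltac:(lra)) as [d [Hd Hc']].
    assert (Hnub : ~ is_upper_bound E (i - d/2)).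
    { intro H'. specialize (Hl _ H'). lra. }
    apply not_all_ex_not in Hnub. destruct Hnub as [v Hv].
    apply imply_to_and in Hv. destruct Hv as [[n ->] Hv].
    pose proof (Hall n). pose proof (pwC k n Hk).
    specialize (Hc' (pw k n) (pw k n) ltac:(lra) ltac:(lra) ltac:(apply rabs_lt_i; lra) ltac:(apply rabs_lt_i; lra)).
    apply rabs_lt_e in Hc'. rewrite <- pw_add in Hc' by lra.
    pose proof (Hall (n + n)%nat). lra.
  - intros u Hu'. apply Hl. intros v [n ->]. apply Hu'.
Qed.


Ltac i01 := match goal with
 | |- 0 <= U ?x ?y <= 1 => apply UI; i01
 | |- 0 <= pw ?p ?n <= 1 => apply pwI; i01
 | |- _ => lra
end.

Variables a b : R.
Hypothesis Ha0 : 0 <= a.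
Hypothesis Haa : U a a = a.
Hypothesis Hbb : U b b = b.
Hypothesis Hab : a < b.
Hypothesis Hbe : b <= e.
Hypothesis Hno : forall c, a < c < b -> U c c <> c.

Lemma TI p q : a <= p <= b -> a <= q <= b -> a <= U p q <= b.
Proof.
  intros Hp Hq. split.
  - rewrite <- Haa at 1. apply Rle_trans with (U p a); [apply Um1|apply Um2]; lra.
  - rewrite <- Hbb. apply Rle_trans with (U b q); [apply Um1|apply Um2]; lra.
Qed.

Lemma PowLem r m : a <= r < b -> a < m <= b -> exists N, pw r N < m.
Proof.
  intros Hr Hm. apply NNPP. intro Hn.
  assert (Hall : forall N, m <= pw r N).
  { intro N. destruct (Rlt_dec (pw r N) m) as [H|H]; [exfalso; apply Hn; exists N; auto|lra]. }
  set (E := fun v => forall n, v <= pw r (S n)).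
  assert (Hb : bound E) by (exists r; intros v Hv; specialize (Hv O); simpl in Hv; rewrite Uer in Hv; lra).
  assert (Hne : exists v, E v) by (exists m; intro n; apply Hall).
  destruct (completeness E Hb Hne) as [l [Hub Hl]].
  assert (Hlm : m <= l) by (apply Hub; intro n; apply Hall).
  assert (Hlp : forall n, l <= pw r (S n)) by (intro n; apply Hl; intros v Hv; apply Hv).
  assert (Hlr : l <= r) by (specialize (Hlp O); simpl in Hlp; rewrite Uer in Hlp; lra).
  apply (Hno l); [lra|].
  pose proof (Ule' l l ltac:(lra) ltac:(lra)).
  destruct (Req_dec (U l l) l) as [Eq|Ne]; auto. exfalso.
  destruct (Tcont l l ltac:(lra) ltac:(lra) (l - U l l) ltac:(lra)) as [d [Hd Hc']].
  assert (Hnub : ~ (forall n, l + d/2 <= pw r (S n))).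
  { intro H'. specialize (Hub _ H'). lra. }
  apply not_all_ex_not in Hnub. destruct Hnub as [n Hv].
  pose proof (Hlp n). pose proof (pwT r (S n) ltac:(lra)).
  specialize (Hc' (pw r (S n)) (pw r (S n)) ltac:(lra) ltac:(lra) ltac:(apply rabs_lt_i; lra) ltac:(apply rabs_lt_i; lra)).
  apply rabs_lt_e in Hc'. rewrite <- pw_add in Hc' by lra.
  pose proof (Hlp (n + S n)%nat). simpl in Hc'. simpl in H2. lra.
Qed.

Lemma Arch p q : a < p <= b -> a <= q < b -> U p q = p -> False.
Proof.
  intros Hp Hq Hpq.
  assert (H : forall N, U p (pw q N) = p).
  { induction N; simpl; [rewrite Uer; lra|]. rewrite Uass by i01. rewrite Hpq. exact IHN. }
  destruct (PowLem q p Hq Hp) as [N HN].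
  pose proof (Ule p (pw q N) ltac:(lra) ltac:(i01)). rewrite H in H0. lra.
Qed.

Lemma Div p q : a <= p <= q -> q <= b -> exists r, a <= r <= b /\ U q r = p.
Proof.
  intros Hp Hq. apply Tivt; try lra.
  rewrite Ucom by lra. rewrite (Tidem_min a q) by lra. rewrite Ucom by lra. rewrite (Tidem_max b q) by lra. lra.
Qed.

Lemma Tlt x r : a <= x < b -> a < r <= b -> U x r < r.
Proof.
  intros Hx Hr. pose proof (Ule x r ltac:(lra) ltac:(lra)).
  destruct (Req_dec (U x r) r) as [E|E]; [|lra]. exfalso.
  apply (Arch r x); auto. rewrite Ucom by lra. exact E.
Qed.

Lemma Strict r p q : a <= r <= b -> a <= p < q -> q <= b -> a < U r p -> U r p < U r q.
Proof.
  intros Hr Hp Hq Hrp.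
  destruct (Div p q ltac:(lra) ltac:(lra)) as [k [Hk Hk']].
  assert (Hkb : k < b) by (destruct (Req_dec k b) as [E|E]; [rewrite E, Ucom, (Tidem_max b q) in Hk' by lra; lra|lra]).
  pose proof (Um2 r p q ltac:(lra) ltac:(lra) ltac:(lra) ltac:(lra)).
  destruct (Req_dec (U r p) (U r q)) as [E|E]; [|lra]. exfalso.
  assert (E2 : U r p = U (U r q) k) by (rewrite <- Hk'; apply Uass; lra).
  rewrite <- E in E2. pose proof (TI r p ltac:(lra) ltac:(lra)).
  apply (Arch (U r p) k); [lra|lra|auto].
Qed.

Lemma Gap x z : a <= x <= b -> e <= z <= 1 -> U x z <= b \/ e < U x z.
Proof.
  intros Hx Hz. destruct (Tidem_int b z ltac:(lra) Hbb Hz) as [H|H].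
  - left. rewrite <- H. apply Um1; lra.
  - destruct (Rle_dec (U x z) e) as [H1|H1]; [left|right; lra].
    assert (E : U b (U x z) = U x z) by (rewrite Uass, (Ucom b x), <- Uass, H by lra; reflexivity).
    pose proof (Ule' b (U x z) ltac:(lra) ltac:(pose proof (Uge' x z ltac:(lra) ltac:(lra)); lra)).
    lra.
Qed.

Lemma Cint x c : a <= x <= b -> e <= c <= 1 -> U c c = c -> U x c = x \/ U x c = c.
Proof.
  intros Hx Hc0 Hcc. set (v := U x c).
  assert (Hv1 : x <= v) by (apply Uge'; lra).
  assert (Hv2 : v <= c) by (apply Ule; lra).
  assert (Hvc : U v c = v) by (unfold v; rewrite <- Uass, Hcc by lra; reflexivity).
  destruct (Gap x c Hx Hc0) as [H|H]; fold v in H.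
  - left. destruct (Req_dec v x) as [E|E]; auto. exfalso.
    destruct (Div x v ltac:(lra) ltac:(lra)) as [w [Hw Hw']].
    assert (E2 : U (U w v) c = U w (U v c)) by (symmetry; apply Uass; lra).
    rewrite Hvc in E2. rewrite (Ucom w v), Hw' in E2 by lra. fold v in E2. lra.
  - right. pose proof (Uge v c ltac:(lra) ltac:(lra)). lra.
Qed.


Lemma ShiftN m eps : a < m < b -> 0 < eps -> m + eps <= b ->
  exists N, forall s, e <= s <= 1 -> m + eps <= U m s -> U m (pw s N) <= e -> False.
Proof.
  intros Hm Heps Hme.
  destruct (Tivt (m + eps) a b m ltac:(lra) ltac:(lra) ltac:(lra)) as [rb [Hrb Hrb']].
  { rewrite Ucom, (Tidem_min a (m+eps)), Ucom, (Tidem_max b (m+eps)) by lra. lra. }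
  assert (Hrbb : rb < b).
  { destruct (Req_dec rb b) as [E|E]; [|lra]. rewrite E, Ucom, (Tidem_max b (m+eps)) in Hrb' by lra. lra. }
  destruct (PowLem rb m ltac:(lra) ltac:(lra)) as [N HN].
  exists N. intros s Hs Hp1 Hq.
  destruct N as [|N]. { simpl in HN. lra. }
  set (p1 := U m s) in *.
  assert (Hp1e : p1 <= e).
  { destruct (Rle_dec p1 e) as [H|H]; auto. exfalso.
    assert (U m s <= U m (pw s (S N))) by (apply Um2; try i01; apply pwC_ge; lra). fold p1 in H0. lra. }
  assert (Hp1r : 0 <= p1 <= e) by lra.
  destruct (Tivt p1 a rb m Hp1r ltac:(lra) ltac:(lra)) as [r1 [Hr1 Hr1']].
  { rewrite Ucom, (Tidem_min a p1) by lra. split; [lra|].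
    rewrite <- Hrb'. apply Um1; lra. }
  assert (Id : forall k, U (U m (pw s k)) (pw r1 k) = m).
  { induction k; simpl. { rewrite !Uer by i01. reflexivity. }
    rewrite (Uass m s) by i01. fold p1.
    assert (HA : 0 <= pw s k <= 1) by i01. assert (HB : 0 <= pw r1 k <= 1) by i01.
    set (A := pw s k) in *. set (B := pw r1 k) in *.
    rewrite (Uass (U p1 A) r1 B) by i01.
    rewrite <- (Uass p1 A r1) by i01. rewrite (Ucom A r1) by i01. rewrite (Uass p1 r1 A) by i01.
    rewrite Hr1'.
    exact IHk. }
  specialize (Id (S N)).
  assert (Hq0 : 0 <= U m (pw s (S N)) <= e).
  { assert (0 <= U m (pw s (S N)) <= 1) by i01. lra. }
  pose proof (Ule (U m (pw s (S N))) (pw r1 (S N)) Hq0 ltac:(i01)).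
  rewrite Id in H.
  pose proof (pw_monb r1 rb (S N) ltac:(lra) ltac:(lra) ltac:(lra)). lra.
Qed.


Lemma NLR x y eps d : a < x < b -> e <= y < 1 -> 0 < eps -> 0 < d -> U x y <= b ->
  (forall t, y < t < y + d -> t <= 1 -> U x y + eps <= U x t /\ U x t <= b) -> False.
Proof.
  intros Hx Hy Heps Hd Hm Hyp.
  set (m := U x y) in *.
  assert (Hmx : x <= m) by (apply Uge'; lra).
  set (t0 := Rmin (y + d/2) 1).
  assert (Ht0 : y < t0 /\ t0 <= 1 /\ t0 <= y + d/2).
  { unfold t0; split; [apply Rmin_glb_lt; lra|split; [apply Rmin_r|apply Rmin_l]]. }
  destruct (Hyp t0 ltac:(lra) ltac:(lra)) as [H1 H2].
  destruct (ShiftN m eps ltac:(lra) Heps ltac:(lra)) as [N HN].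
  destruct (SMAX y Hy) as [ss [Hss [Hyss [Hssss Hgt]]]].
  destruct (PowCont y ss ltac:(lra) ltac:(lra) Hyss N (y + d) ltac:(lra)) as [eta [Heta Hpc]].
  set (s1 := Rmin (ss + eta) 1).
  assert (Hs1 : ss < s1 /\ s1 <= 1 /\ s1 <= ss + eta).
  { unfold s1; split; [apply Rmin_glb_lt; lra|split; [apply Rmin_r|apply Rmin_l]]. }
  pose proof (Hgt s1 ltac:(lra)) as Hys1.
  assert (Hys1' : U y s1 <= 1) by (pose proof (UI y s1 ltac:(lra) ltac:(lra)); lra).
  set (t1 := Rmin ((y + U y s1)/2) (y + d/2)).
  assert (Ht1 : y < t1 /\ t1 <= (y + U y s1)/2 /\ t1 <= y + d/2).
  { unfold t1; split; [apply Rmin_glb_lt; lra|split; [apply Rmin_l|apply Rmin_r]]. }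
  destruct (Civt y t1 ltac:(lra) ltac:(lra)) as [sg [Hsg Hsg']].
  assert (Hsg1 : sg <= s1).
  { destruct (Rle_dec sg s1) as [H|H]; auto. exfalso. apply Rnot_le_lt in H.
    assert (A1 : 0 <= y <= 1) by lra. assert (A2 : 0 <= s1 <= 1) by lra. assert (A3 : 0 <= sg <= 1) by lra.
    assert (A4 : s1 <= sg) by lra.
    pose proof (Um2 y s1 sg A1 A2 A3 A4). lra. }
  apply (HN sg Hsg).
  - assert (E : U m sg = U x t1) by (rewrite <- Hsg'; unfold m; symmetry; apply Uass; lra).
    rewrite E. apply (Hyp t1); lra.
  - pose proof (Hpc sg Hsg ltac:(lra)) as Hpu.
    pose proof (pwC sg N ltac:(lra)) as Hp.
    assert (Hu2 : y <= U y (pw sg N)) by (apply Uge'; lra).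
    assert (E : U m (pw sg N) = U x (U y (pw sg N))) by (unfold m; symmetry; apply Uass; try i01; lra).
    rewrite E.
    destruct (Req_dec (U y (pw sg N)) y) as [Ey|Ey].
    + rewrite Ey. fold m. lra.
    + assert (U y (pw sg N) <= 1) by (assert (0 <= U y (pw sg N) <= 1) by i01; lra).
      destruct (Hyp (U y (pw sg N)) ltac:(lra) ltac:(lra)). lra.
Qed.

Lemma NLL x y eps : a < x < b -> e < y <= 1 -> 0 < eps -> U x y <= b ->
  (forall t, e <= t < y -> U x t <= U x y - eps) -> False.
Proof.
  intros Hx Hy Heps Hm Hyp.
  set (m := U x y) in *.
  set (L := m - eps). assert (HLd : L = m - eps) by reflexivity.
  assert (HxL : x <= L) by (pose proof (Hyp e ltac:(lra)); rewrite Uer in H by lra; unfold L; lra).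
  destruct (Req_dec (U y y) y) as [Eyy|Eyy].
  { destruct (Cint x y ltac:(lra) ltac:(lra) Eyy) as [E|E]; fold m in E; unfold L in HxL; lra. }
  assert (Hy1 : y < 1).
  { destruct (Req_dec y 1) as [E|E]; [|lra]. exfalso. apply Eyy. rewrite E. apply U1; lra. }
  destruct (SMAX y ltac:(lra)) as [s0 [Hs0 [Hys0 [Hs0s0 Hgt]]]].
  assert (Hs0y : s0 < y).
  { assert (s0 <= U y s0) by (apply Uge; lra). destruct (Req_dec s0 y) as [E|E]; [|lra].
    exfalso. apply Eyy. rewrite E in Hs0s0. exact Hs0s0. }
  destruct (Tivt L a b x ltac:(lra) ltac:(lra) ltac:(lra)) as [rL [HrL HrL']].
  { rewrite Ucom, (Tidem_min a L), Ucom, (Tidem_max b L) by lra. lra. }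
  assert (HmI : a <= m <= b) by lra.
  assert (HrL2 : U rL L = x) by (rewrite Ucom by lra; exact HrL').
  pose proof (Strict rL L m ltac:(lra) ltac:(lra) ltac:(lra) ltac:(rewrite HrL2; lra)) as Hst.
  rewrite HrL2 in Hst.
  set (eps2 := U rL m - x).
  assert (Hrm : U rL m <= m) by (apply Ule; lra).
  destruct (ShiftN x eps2 Hx ltac:(unfold eps2; lra) ltac:(unfold eps2; lra)) as [N HN].
  destruct (PowCont s0 s0 ltac:(lra) ltac:(lra) Hs0s0 N y Hs0y) as [eta [Heta Hpc]].
  set (s1 := Rmin (s0 + eta) 1).
  assert (Hs1 : s0 < s1 /\ s1 <= 1 /\ s1 <= s0 + eta).
  { unfold s1; split; [apply Rmin_glb_lt; lra|split; [apply Rmin_r|apply Rmin_l]]. }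
  pose proof (Hgt s1 ltac:(lra)) as Hys1.
  destruct (Ccont y s1 ltac:(lra) ltac:(lra) (U y s1 - y) ltac:(lra)) as [d [Hd Hc']].
  set (t := Rmax (y - d/2) e).
  assert (Ht : e <= t /\ y - d/2 <= t /\ t < y).
  { unfold t; split; [apply Rmax_r|split; [apply Rmax_l|apply Rmax_lub_lt; lra]]. }
  specialize (Hc' t s1 ltac:(lra) ltac:(lra) ltac:(apply rabs_lt_i; lra) ltac:(rewrite Rminus_diag, Rabs_R0; lra)).
  apply rabs_lt_e in Hc'.
  destruct (ivt (U t) e s1 y) as [sg [Hsg Hsg']]; try lra.
  - apply rmU; lra.
  - intros s Hs eps' Heps'. destruct (rcC t ltac:(lra) s ltac:(lra) eps' Heps') as [d' [Hd' H']].
    exists d'; split; auto. intros u Hu0 Hus. apply H'; auto; lra.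
  - rewrite Uer; lra.
  - set (pt := U x t).
    assert (Hpt : x <= pt <= L) by (split; [apply Uge'; lra|apply Hyp; lra]).
    destruct (Tivt pt rL b x ltac:(lra) ltac:(lra) ltac:(lra)) as [r [Hr Hr']].
    { split.
      - rewrite <- HrL'. apply Um1; lra.
      - rewrite Ucom, (Tidem_max b pt) by lra. lra. }
    assert (Hraise : x + eps2 <= U x sg).
    { unfold eps2.
      assert (E : U x sg = U r m).
      { rewrite <- Hr' at 1. rewrite (Ucom pt r) by lra. rewrite <- Uass by lra.
        unfold pt. rewrite <- (Uass x t sg) by lra. rewrite Hsg'. reflexivity. }
      rewrite E. pose proof (Um1 rL r m ltac:(lra) ltac:(lra) ltac:(lra) ltac:(lra)). lra. }
    apply (HN sg ltac:(lra) Hraise).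
    pose proof (Hpc sg ltac:(lra) ltac:(lra)) as Hpu.
    pose proof (pwC sg N ltac:(lra)) as Hp.
    assert (pw sg N <= U s0 (pw sg N)) by (apply Uge; lra).
    assert (U x (pw sg N) <= U x y) by (apply Um2; lra).
    fold m in H0. lra.
Qed.


Lemma jump (f : R -> R) y : 0 <= y <= 1 -> rmono f 0 1 -> ~ limit1_in f I01 (f y) y ->
  (y < 1 /\ exists eps, 0 < eps /\ forall t, y < t <= 1 -> f y + eps <= f t) \/
  (0 < y /\ exists eps, 0 < eps /\ forall t, 0 <= t < y -> f t <= f y - eps).
Proof.
  intros Hy Hm Hnc. apply NNPP. intro Hn. apply Hnc. intros eps Heps.
  assert (HR : exists d1, 0 < d1 /\ forall t, y <= t <= 1 -> t < y + d1 -> f t < f y + eps).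
  { destruct (Rlt_dec y 1) as [Hy1|Hy1].
    - assert (H : ~ forall t, y < t <= 1 -> f y + eps <= f t)
        by (intro H; apply Hn; left; split; [auto|exists eps; auto]).
      apply not_all_ex_not in H. destruct H as [t Ht]. apply imply_to_and in Ht.
      destruct Ht as [Ht1 Ht2]. apply Rnot_le_lt in Ht2.
      exists (t - y). split; [lra|]. intros t' H1 H2.
      apply Rle_lt_trans with (f t); [apply Hm; lra|lra].
    - exists 1. split; [lra|]. intros t H1 H2. assert (E : t = y) by lra. rewrite E. lra. }
  assert (HL : exists d2, 0 < d2 /\ forall t, 0 <= t <= y -> y - d2 < t -> f y - eps < f t).
  { destruct (Rlt_dec 0 y) as [Hy1|Hy1].
    - assert (H : ~ forall t, 0 <= t < y -> f t <= f y - eps)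
        by (intro H; apply Hn; right; split; [auto|exists eps; auto]).
      apply not_all_ex_not in H. destruct H as [t Ht]. apply imply_to_and in Ht.
      destruct Ht as [Ht1 Ht2]. apply Rnot_le_lt in Ht2.
      exists (y - t). split; [lra|]. intros t' H1 H2.
      apply Rlt_le_trans with (f t); [lra|apply Hm; lra].
    - exists 1. split; [lra|]. intros t H1 H2. assert (E : t = y) by lra. rewrite E. lra. }
  destruct HR as [d1 [Hd1 HR]]. destruct HL as [d2 [Hd2 HL]].
  exists (Rmin d1 d2). split; [apply Rmin_glb_lt; lra|].
  intros x [Hx Hd]. simpl in Hd. unfold R_dist in Hd. simpl. unfold R_dist.
  unfold I01 in Hx. apply rabs_lt_e in Hd.
  assert (Hm1 : Rmin d1 d2 <= d1) by apply Rmin_l. assert (Hm2 : Rmin d1 d2 <= d2) by apply Rmin_r.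
  apply rabs_lt_i. destruct (Rle_dec y x) as [H|H].
  - specialize (HR x ltac:(lra) ltac:(lra)). assert (f y <= f x) by (apply Hm; lra). lra.
  - specialize (HL x ltac:(lra) ltac:(lra)). assert (f x <= f y) by (apply Hm; lra). lra.
Qed.

Definition TypeR x y := e <= y < 1 /\ U x y <= b /\ forall t, y < t <= 1 -> e < U x t.
Definition TypeL x y := e < y <= 1 /\ e < U x y /\ forall t, e <= t < y -> U x t <= b.

Lemma Disc x y : a < x < b -> 0 <= y <= 1 -> ~ sec_continuous_at U x y -> TypeR x y \/ TypeL x y.
Proof.
  intros Hx Hy Hnc. unfold sec_continuous_at in Hnc.
  destruct (jump (U x) y Hy ltac:(apply rmU; lra) Hnc) as [[Hy1 [eps [Heps HJ]]]|[Hy0 [eps [Heps HJ]]]].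
  - left.
    assert (Hye : e <= y).
    { destruct (Rle_dec e y) as [H|H]; auto. exfalso.
      destruct (Tcont x y ltac:(lra) ltac:(lra) eps Heps) as [d [Hd Hc']].
      set (t := Rmin (y + d/2) e).
      assert (Ht : y < t /\ t <= e /\ t <= y + d/2).
      { unfold t; split; [apply Rmin_glb_lt; lra|split; [apply Rmin_r|apply Rmin_l]]. }
      specialize (Hc' x t ltac:(lra) ltac:(lra) ltac:(rewrite Rminus_diag, Rabs_R0; lra) ltac:(apply rabs_lt_i; lra)).
      apply rabs_lt_e in Hc'. specialize (HJ t ltac:(lra)). lra. }
    assert (Hme : U x y < e).
    { destruct (Rlt_dec (U x y) e) as [H|H]; auto. exfalso.
      destruct (RC x y ltac:(lra) ltac:(lra) ltac:(lra) eps Heps) as [d [Hd Hc']].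
      set (t := Rmin (y + d/2) 1).
      assert (Ht : y < t /\ t <= 1 /\ t <= y + d/2).
      { unfold t; split; [apply Rmin_glb_lt; lra|split; [apply Rmin_r|apply Rmin_l]]. }
      specialize (Hc' t ltac:(lra) ltac:(lra)). specialize (HJ t ltac:(lra)). lra. }
    assert (Hmb : U x y <= b) by (destruct (Gap x y ltac:(lra) ltac:(lra)); lra).
    split; [lra|split; [exact Hmb|]].
    intros t Ht. destruct (Gap x t ltac:(lra) ltac:(lra)) as [H|H]; auto. exfalso.
    apply (NLR x y eps (t - y) Hx ltac:(lra) Heps ltac:(lra) Hmb).
    intros t' Ht' Ht'1. split; [apply HJ; lra|].
    apply Rle_trans with (U x t); [apply Um2; lra|exact H].
  - right.
    assert (Hye : e < y).
    { destruct (Rlt_dec e y) as [H|H]; auto. exfalso.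
      destruct (Tcont x y ltac:(lra) ltac:(lra) eps Heps) as [d [Hd Hc']].
      set (t := Rmax (y - d/2) 0).
      assert (Ht : 0 <= t /\ y - d/2 <= t /\ t < y).
      { unfold t; split; [apply Rmax_r|split; [apply Rmax_l|apply Rmax_lub_lt; lra]]. }
      specialize (Hc' x t ltac:(lra) ltac:(lra) ltac:(rewrite Rminus_diag, Rabs_R0; lra) ltac:(apply rabs_lt_i; lra)).
      apply rabs_lt_e in Hc'. specialize (HJ t ltac:(lra)). lra. }
    assert (Hlow : forall t, e <= t < y -> U x t <= b).
    { intros z1 Hz1. destruct (Gap x z1 ltac:(lra) ltac:(lra)) as [H|H]; auto. exfalso.
      destruct (LC x y z1 ltac:(lra) ltac:(lra) Hz1 ltac:(lra) eps Heps) as [d [Hd Hc']].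
      set (t := Rmax (y - d/2) z1).
      assert (Ht : z1 <= t /\ y - d/2 <= t /\ t < y).
      { unfold t; split; [apply Rmax_r|split; [apply Rmax_l|apply Rmax_lub_lt; lra]]. }
      specialize (Hc' t ltac:(lra)). specialize (HJ t ltac:(lra)). lra. }
    split; [lra|split; [|exact Hlow]].
    destruct (Gap x y ltac:(lra) ltac:(lra)) as [H|H]; auto. exfalso.
    apply (NLL x y eps Hx ltac:(lra) Heps H). intros t Ht. apply HJ; lra.
Qed.


Definition Int := forall x z, a < x < b -> e <= z <= 1 -> U x z = x \/ U x z = z.

Lemma RAnchor m s : a < m < b -> e <= s < 1 -> U s s = s -> U m s = m ->
  (forall s', s < s' <= 1 -> e < U m s') -> Int.
Proof.
  intros Hm Hs Hss Hms Hhm.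
  assert (Hfix : forall x, a < x < b -> U x s = x).
  { intros x Hx. destruct (Cint x s ltac:(lra) ltac:(lra) Hss) as [H|H]; auto. exfalso.
    destruct (Rle_dec x m) as [Hxm|Hxm].
    - pose proof (Um1 x m s ltac:(lra) ltac:(lra) ltac:(lra) Hxm). lra.
    - destruct (Div m x ltac:(lra) ltac:(lra)) as [r [Hr Hr']].
      assert (E : U m s = U r s).
      { rewrite <- Hr'. rewrite (Ucom x r) by lra. rewrite <- Uass by lra. rewrite H. reflexivity. }
      pose proof (Uge' r s ltac:(lra) ltac:(lra)). pose proof (Ule x r ltac:(lra) ltac:(lra)).
      assert (Erm : r = m) by lra. rewrite Erm in Hr'.
      apply (Arch m x); [lra|lra|]. rewrite Ucom by lra. exact Hr'. }
  assert (Hhigh : forall x s', a < x < b -> s < s' <= 1 -> e < U x s').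
  { intros x s' Hx Hs'. destruct (Rle_dec m x) as [Hmx|Hmx].
    - apply Rlt_le_trans with (U m s'); [apply Hhm; lra|apply Um1; lra].
    - destruct (Div x m ltac:(lra) ltac:(lra)) as [r [Hr Hr']].
      assert (Hra : a < r) by (destruct (Req_dec r a) as [E|E]; [rewrite E, Ucom, (Tidem_min a m) in Hr' by lra; lra|lra]).
      assert (Hxr : x < r) by (rewrite <- Hr'; apply Tlt; lra).
      assert (Hge : forall t, s < t <= 1 -> r <= U x t).
      { intros t Ht. rewrite <- Hr'. rewrite (Ucom m r) by lra. rewrite <- Uass by lra.
        apply Uge'; [lra|]. pose proof (Hhm t Ht). assert (U m t <= 1) by (pose proof (UI m t); lra). lra. }
      destruct (Gap x s' ltac:(lra) ltac:(lra)) as [H|H]; auto. exfalso.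
      apply (NLR x s (r - x) (s' - s) Hx Hs ltac:(lra) ltac:(lra) ltac:(rewrite Hfix; lra)).
      intros t Ht Ht1. rewrite Hfix by lra. split; [pose proof (Hge t ltac:(lra)); lra|].
      apply Rle_trans with (U x s'); [apply Um2; lra|exact H]. }
  assert (Hid : forall x z, a < x < b -> s < z <= 1 -> U x z = z).
  { intros x z Hx Hz. set (Q0 := U x z).
    assert (HQ0 : e < Q0) by (apply Hhigh; lra).
    assert (HQz : Q0 <= z) by (apply Ule; lra).
    destruct (Req_dec Q0 z) as [E|E]; auto. exfalso.
    assert (Haz : U a z = a).
    { destruct (Tidem_int a z ltac:(lra) Haa ltac:(lra)) as [H|H]; auto. exfalso.
      pose proof (Um1 a x z ltac:(lra) ltac:(lra) ltac:(lra) ltac:(lra)). fold Q0 in H0. lra. }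
    destruct (Civt Q0 z ltac:(lra) ltac:(lra)) as [k [Hk Hk']].
    assert (Hpwx : forall n, a <= pw x (S n) <= x).
    { induction n.
      - simpl. rewrite Uer by lra. lra.
      - change (pw x (S (S n))) with (U x (pw x (S n))). split.
        + rewrite <- Haa at 1. apply Rle_trans with (U a (pw x (S n))); [apply Um2|apply Um1]; lra.
        + apply Ule'; lra. }
    set (Qn := fun n => U (pw x (S n)) z).
    assert (HQnS : forall n, Qn (S n) = U x (Qn n)).
    { intro n. unfold Qn. simpl. symmetry. apply Uass; try i01. }
    assert (HQ0' : Qn O = Q0) by (unfold Qn; simpl; rewrite Uer by lra; reflexivity).
    assert (Hhi : forall n, e < Qn n).
    { induction n; [rewrite HQ0'; exact HQ0|].
      pose proof (Hpwx (S n)) as Hp.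
      destruct (Req_dec (pw x (S (S n))) a) as [Ea|Ea].
      - exfalso. assert (E1 : Qn (S n) = a) by (unfold Qn; rewrite Ea; exact Haz).
        rewrite HQnS in E1. assert (Qn n <= 1) by (unfold Qn; pose proof (UI (pw x (S n)) z ltac:(i01) ltac:(lra)); lra).
        pose proof (Uge' x (Qn n) ltac:(lra) ltac:(lra)). lra.
      - unfold Qn. apply Hhigh; lra. }
    assert (HQ1 : forall n, Qn n <= 1) by (intro n; unfold Qn; pose proof (UI (pw x (S n)) z ltac:(i01) ltac:(lra)); lra).
    assert (HQrec : forall n, Qn n = U (Qn (S n)) k).
    { intro n. unfold Qn at 1. rewrite <- Hk' at 1. rewrite Uass by (try i01; lra).
      f_equal. unfold Q0. rewrite Uass by (try i01; lra). unfold Qn. f_equal. simpl.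
      apply Ucom; try i01; lra. }
    assert (Hzn : forall n, z = U (Qn n) (pw k (S n))).
    { induction n.
      - rewrite HQ0'. simpl. rewrite Uer by lra. symmetry; exact Hk'.
      - rewrite IHn. rewrite HQrec. rewrite <- Uass by (try i01; pose proof (HQ1 (S n)); pose proof (Hhi (S n)); lra).
        reflexivity. }
    assert (Hkz : forall n, pw k n <= z).
    { intro n. destruct n as [|n]; [simpl; lra|].
      rewrite (Hzn n). apply Uge; [pose proof (HQ1 n); pose proof (Hhi n); lra|i01]. }
    destruct (SupPow k Hk) as [i [Hi [Hii [Hub Hl]]]].
    assert (Hiz : i <= z) by (apply Hl; exact Hkz).
    assert (Hki : k <= i) by (pose proof (Hub 1%nat); simpl in H; rewrite Uer in H by lra; exact H).
    assert (Ezi : z = i).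
    { destruct (Rle_dec Q0 i) as [H|H].
      - pose proof (Um1 Q0 i k ltac:(lra) ltac:(lra) ltac:(lra) H).
        pose proof (Um2 i k i ltac:(lra) ltac:(lra) ltac:(lra) Hki). lra.
      - exfalso. pose proof (Cidem_max i Q0 ltac:(lra) Hii ltac:(lra)).
        pose proof (Um2 Q0 k i ltac:(lra) ltac:(lra) ltac:(lra) Hki).
        rewrite Ucom in H0 by lra. lra. }
    rewrite <- Ezi in Hii.
    destruct (Cint x z ltac:(lra) ltac:(lra) Hii) as [H|H]; fold Q0 in H; lra. }
  intros x z Hx Hz. destruct (Rle_dec z s) as [H|H].
  - left. pose proof (Uge' x z ltac:(lra) ltac:(lra)). pose proof (Um2 x z s ltac:(lra) ltac:(lra) ltac:(lra) H).
    rewrite Hfix in H1 by lra. lra.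
  - right. apply Hid; lra.
Qed.


Lemma L1 x i : a < x < b -> e < i <= 1 -> U i i = i -> U x i = i ->
  (forall t, e <= t < i -> U x t <= b) -> forall t, e <= t < i -> U x t = x.
Proof.
  intros Hx Hi Hii Hxi Hlow t Ht.
  set (q := U x t).
  assert (Hq : x <= q <= b) by (split; [apply Uge'; lra|apply Hlow; lra]).
  destruct (Req_dec q x) as [E|E]; auto. exfalso.
  destruct (ShiftN x (q - x) Hx ltac:(lra) ltac:(lra)) as [N HN].
  assert (Hpw : forall n, pw t n < i).
  { induction n; [simpl; lra|].
    pose proof (pwC t n ltac:(lra)) as Hp.
    change (pw t (S n)) with (U t (pw t n)).
    assert (H1 : U t (pw t n) <= U i i).
    { apply Rle_trans with (U i (pw t n)); [apply Um1|apply Um2]; lra. }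
    destruct (Req_dec (U t (pw t n)) i) as [E2|E2]; [|lra]. exfalso.
    assert (E3 : U x i = U (U x (pw t n)) t).
    { rewrite <- E2. rewrite (Ucom t (pw t n)) by lra. apply Uass; lra. }
    pose proof (Hlow (pw t n) ltac:(lra)).
    assert (U x (pw t n) >= 0) by (pose proof (UI x (pw t n)); lra).
    pose proof (Ule (U x (pw t n)) t ltac:(lra) ltac:(lra)). lra. }
  apply (HN t ltac:(lra)); [fold q; lra|].
  pose proof (pwC t N ltac:(lra)). pose proof (Hpw N). pose proof (Hlow (pw t N) ltac:(lra)). lra.
Qed.

Lemma LAnchor x0 i : a < x0 < b -> e < i <= 1 -> U i i = i -> U x0 i = i ->
  (forall t, e <= t < i -> U x0 t <= b) -> Int.
Proof.
  intros Hx0 Hi Hii Hx0i Hlow.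
  assert (Hall1 : forall x, a < x < b -> U x i = i).
  { intros x Hx. destruct (Rle_dec x0 x) as [H|H].
    - pose proof (Um1 x0 x i ltac:(lra) ltac:(lra) ltac:(lra) H). pose proof (Ule x i ltac:(lra) ltac:(lra)). lra.
    - destruct (Div x x0 ltac:(lra) ltac:(lra)) as [r [Hr Hr']].
      assert (Hra : a < r) by (destruct (Req_dec r a) as [E|E]; [rewrite E, Ucom, (Tidem_min a x0) in Hr' by lra; lra|lra]).
      assert (Hxr : x < r) by (rewrite <- Hr'; apply Tlt; lra).
      assert (E : U x i = U r i).
      { rewrite <- Hr'. rewrite (Ucom x0 r) by lra. rewrite <- Uass by lra. rewrite Hx0i. reflexivity. }
      destruct (Cint x i ltac:(lra) ltac:(lra) Hii) as [H1|H1]; auto.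
      destruct (Cint r i ltac:(lra) ltac:(lra) Hii) as [H2|H2]; lra. }
  assert (Hfix0 := L1 x0 i Hx0 Hi Hii Hx0i Hlow).
  assert (Hall2 : forall x t, a < x < b -> e <= t < i -> U x t <= b).
  { intros x t Hx Ht. destruct (Rle_dec x x0) as [H|H].
    - apply Rle_trans with (U x0 t); [apply Um1; lra|apply Hlow; lra].
    - destruct (Div x0 x ltac:(lra) ltac:(lra)) as [r [Hr Hr']].
      assert (Hra : a < r) by (destruct (Req_dec r a) as [E|E]; [rewrite E, Ucom, (Tidem_min a x) in Hr' by lra; lra|lra]).
      assert (Hrb : r < b) by (destruct (Req_dec r b) as [E|E]; [rewrite E, Ucom, (Tidem_max b x) in Hr' by lra; lra|lra]).
      assert (Hxr : x0 < r) by (rewrite <- Hr'; apply Tlt; lra).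
      destruct (Gap x t ltac:(lra) ltac:(lra)) as [H1|H1]; auto. exfalso.
      assert (E : U x0 t = U r (U x t)).
      { rewrite <- Hr'. rewrite (Ucom x r) by lra. symmetry. apply Uass; lra. }
      rewrite Hfix0 in E by lra.
      assert (U x t <= 1) by (pose proof (UI x t); lra).
      pose proof (Uge' r (U x t) ltac:(lra) ltac:(lra)). lra. }
  intros x z Hx Hz. destruct (Rlt_dec z i) as [H|H].
  - left. apply (L1 x i Hx Hi Hii (Hall1 x Hx)); [intros t Ht; apply Hall2; lra|lra].
  - right. rewrite <- (Cidem_max i z ltac:(lra) Hii ltac:(lra)).
    rewrite Uass by lra. rewrite Hall1 by lra. reflexivity.
Qed.

Lemma RA x y : a < x < b -> TypeR x y -> U x y < b -> Int.
Proof.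
  intros Hx [Hy [Hm Hh]] Hmb.
  destruct (SMAX y ltac:(lra)) as [s [Hs [Hys [Hss Hgt]]]].
  set (m := U x y) in *.
  assert (Hxm : x <= m) by (apply Uge'; lra).
  apply (RAnchor m s ltac:(lra) Hs Hss).
  - unfold m. rewrite <- Uass by lra. rewrite Hys. reflexivity.
  - intros s' Hs'. unfold m. rewrite <- Uass by lra. apply Hh.
    pose proof (Hgt s' Hs'). split; [lra|]. pose proof (UI y s'); lra.
Qed.

Lemma mainT x1 x2 y : a < x1 -> x1 < x2 -> x2 < b -> 0 <= y <= 1 ->
  ~ sec_continuous_at U x1 y -> ~ sec_continuous_at U x2 y -> Int.
Proof.
  intros H1 H12 H2 Hy Hd1 Hd2.
  destruct (Div x1 x2 ltac:(lra) ltac:(lra)) as [w [Hw Hw']].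
  assert (Hwa : a < w) by (destruct (Req_dec w a) as [E|E]; [rewrite E, Ucom, (Tidem_min a x2) in Hw' by lra; lra|lra]).
  assert (Hwb : w < b) by (destruct (Req_dec w b) as [E|E]; [rewrite E, Ucom, (Tidem_max b x2) in Hw' by lra; lra|lra]).
  assert (HW : forall t, e <= t <= 1 -> U x2 t <= b -> U x1 t <= w).
  { intros t Ht Hl. rewrite <- Hw'. rewrite (Ucom x2 w) by lra. rewrite <- Uass by lra.
    apply Ule'; [lra|]. split; [pose proof (UI x2 t); lra|lra]. }
  destruct (Disc x1 y ltac:(lra) Hy Hd1) as [R1|L1'];
  destruct (Disc x2 y ltac:(lra) Hy Hd2) as [R2|L2].
  - destruct R2 as [Hy2 [Hm2 _]]. apply (RA x1 y ltac:(lra) R1).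
    pose proof (HW y ltac:(lra) Hm2). lra.
  - destruct L2 as [Hy2 [_ Hl2]]. destruct R1 as [Hy1 [Hm1 Hh1]] eqn:ER1.
    destruct (Rle_dec (U x1 y) w) as [H|H].
    + apply (RA x1 y ltac:(lra) R1). lra.
    + exfalso. apply (NLL x1 y (U x1 y - w) ltac:(lra) ltac:(lra) ltac:(lra) Hm1).
      intros t Ht. pose proof (HW t ltac:(lra) (Hl2 t Ht)). lra.
  - destruct R2 as [Hy2 [Hm2 _]]. destruct L1' as [_ [Hm1 _]].
    pose proof (HW y ltac:(lra) Hm2). lra.
  - destruct L2 as [Hy2 [Hm2 Hl2]]. destruct L1' as [_ [Hm1 _]].
    destruct (Req_dec (U y y) y) as [Eyy|Eyy].
    + destruct (Cint x2 y ltac:(lra) ltac:(lra) Eyy) as [E|E]; [lra|].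
      apply (LAnchor x2 y ltac:(lra) ltac:(lra) Eyy E Hl2).
    + assert (Hy1 : y < 1).
      { destruct (Req_dec y 1) as [E|E]; [|lra]. exfalso. apply Eyy. rewrite E. apply U1; lra. }
      destruct (SMAX y ltac:(lra)) as [s0 [Hs0 [Hys0 [Hs0s0 Hgt]]]].
      assert (Hs0y : s0 < y).
      { assert (s0 <= U y s0) by (apply Uge; lra). destruct (Req_dec s0 y) as [E|E]; [|lra].
        exfalso. apply Eyy. rewrite E in Hs0s0. exact Hs0s0. }
      assert (Hwh : forall sg, s0 < sg <= 1 -> e < U w sg).
      { intros sg Hsg. pose proof (Hgt sg Hsg) as Hysg.
        destruct (Ccont y sg ltac:(lra) ltac:(lra) (U y sg - y) ltac:(lra)) as [d [Hd Hc']].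
        set (t := Rmax (y - d/2) e).
        assert (Ht : e <= t /\ y - d/2 <= t /\ t < y).
        { unfold t; split; [apply Rmax_r|split; [apply Rmax_l|apply Rmax_lub_lt; lra]]. }
        specialize (Hc' t sg ltac:(lra) ltac:(lra) ltac:(apply rabs_lt_i; lra) ltac:(rewrite Rminus_diag, Rabs_R0; lra)).
        apply rabs_lt_e in Hc'.
        destruct (ivt (U t) e sg y) as [sg' [Hsg' Hsg'']]; try lra.
        - apply rmU; lra.
        - intros s Hs eps' Heps'. destruct (rcC t ltac:(lra) s ltac:(lra) eps' Heps') as [d' [Hd' H']].
          exists d'; split; auto. intros u Hu0 Hus. apply H'; auto; lra.
        - rewrite Uer; lra.
        - assert (E : U x1 y = U (U x1 t) sg') by (rewrite <- Hsg''; apply Uass; lra).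
          pose proof (HW t ltac:(lra) (Hl2 t ltac:(lra))).
          pose proof (Um1 (U x1 t) w sg' ltac:(pose proof (UI x1 t); lra) ltac:(lra) ltac:(lra) H).
          pose proof (Um2 w sg' sg ltac:(lra) ltac:(lra) ltac:(lra) ltac:(lra)). lra. }
      destruct (Cint w s0 ltac:(lra) ltac:(lra) Hs0s0) as [E|E].
      * apply (RAnchor w s0 ltac:(lra) ltac:(lra) Hs0s0 E Hwh).
      * exfalso. set (p := U x2 s0).
        assert (Hp : x2 <= p <= b) by (split; [apply Uge'; lra|apply Hl2; lra]).
        assert (Ewp : U w p = p).
        { unfold p. rewrite Uass by lra. rewrite (Ucom w x2) by lra. rewrite <- Uass by lra. rewrite E. reflexivity. }
        apply (Arch p w); [lra|lra|rewrite Ucom by lra; exact Ewp].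
Qed.

End S.

Lemma concT (U : R -> R -> R) (e a b : R) :
  0 < e < 1 ->
  uninorm U e ->
  in_class_U U e ->
  idempotent U a -> idempotent U b -> a < b ->
  (forall c, a < c < b -> ~ idempotent U c) -> b <= e ->
  (exists y x1 x2, I01 y /\ a < x1 < b /\ a < x2 < b /\ x1 < x2 /\
     ~ sec_continuous_at U x1 y /\ ~ sec_continuous_at U x2 y) ->
  forall x z, a <= x <= b -> I01 z ->
    ((x <= e /\ e <= z) \/ (e <= x /\ z <= e)) ->
    U x z = x \/ U x z = z.
Proof.
  intros He Hu Hc [Ia Haa] [Ib Hbb] Hab Hno Hbe [y [x1 [x2 [Hy [H1 [H2 [H12 [Hd1 Hd2]]]]]]]] x z Hx Hz Hr.
  unfold I01 in *.
  assert (Hno' : forall c, a < c < b -> U c c <> c).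
  { intros c Hc' E. apply (Hno c Hc'). split; [unfold I01; lra|exact E]. }
  pose proof (mainT U e He Hu Hc a b ltac:(lra) Haa Hbb Hab Hbe Hno' x1 x2 y ltac:(lra) H12 ltac:(lra) Hy Hd1 Hd2) as HI.
  destruct Hr as [[Hxe Hez]|[Hex Hze]].
  - destruct (Req_dec x a) as [E|E]; [rewrite E; apply (Tidem_int U e He Hu Hc); lra|].
    destruct (Req_dec x b) as [E'|E']; [rewrite E'; apply (Tidem_int U e He Hu Hc); lra|].
    apply HI; lra.
  - right. assert (E : x = e) by lra. rewrite E. destruct Hu as [_ [_ [_ [_ [_ Hn]]]]]; apply Hn; unfold I01; lra.
Qed.

Definition DU (U : R -> R -> R) := fun p q => 1 - U (1 - p) (1 - q).

Lemma I01n p : I01 p -> I01 (1 - p).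
Proof. unfold I01; lra. Qed.

Lemma dual_uni U e : uninorm U e -> uninorm (DU U) (1 - e).
Proof.
  intros [Ie [Hcl [Hcm [Has [Hmo Hne]]]]]. unfold DU.
  split; [apply I01n; auto|].
  split; [intros x y Hx Hy; apply I01n; apply Hcl; apply I01n; auto|].
  split; [intros x y Hx Hy; rewrite Hcm; auto; apply I01n; auto|].
  split.
  - intros x y z Hx Hy Hz.
    replace (1 - (1 - U (1 - y) (1 - z))) with (U (1 - y) (1 - z)) by ring.
    replace (1 - (1 - U (1 - x) (1 - y))) with (U (1 - x) (1 - y)) by ring.
    rewrite Has; auto; apply I01n; auto.
  - split.
    + intros x1 x2 y H1 H2 Hy H12. assert (U (1 - x2) (1 - y) <= U (1 - x1) (1 - y)).
      { apply Hmo; try apply I01n; auto. lra. } lra.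
    + intros x Hx. replace (1 - (1 - e)) with e by ring. rewrite Hne; [ring|apply I01n; auto].
Qed.

Lemma cont_neg f g : continuous_on_unit_square g ->
  (forall p q, I01 p -> I01 q -> f p q = 1 - g (1 - p) (1 - q)) -> continuous_on_unit_square f.
Proof.
  intros Hg Hf x y Hx Hy eps Heps.
  destruct (Hg (1 - x) (1 - y) (I01n x Hx) (I01n y Hy) eps Heps) as [d [Hd Hd']].
  exists d. split; auto. intros x' y' Hx' Hy' H1 H2.
  rewrite (Hf x' y' Hx' Hy'), (Hf x y Hx Hy).
  replace (1 - g (1 - x') (1 - y') - (1 - g (1 - x) (1 - y))) with
    (- (g (1 - x') (1 - y') - g (1 - x) (1 - y))) by ring.
  rewrite Rabs_Ropp. apply Hd'; try apply I01n; auto.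
  - replace (1 - x' - (1 - x)) with (- (x' - x)) by ring. rewrite Rabs_Ropp; auto.
  - replace (1 - y' - (1 - y)) with (- (y' - y)) by ring. rewrite Rabs_Ropp; auto.
Qed.

Lemma dual_cls U e : 0 < e < 1 -> in_class_U U e -> in_class_U (DU U) (1 - e).
Proof.
  intros He [HT HC]. split.
  - apply (cont_neg _ _ HC). intros p q Hp Hq. unfold T_U, C_U, DU.
    replace (e + (1 - e) * (1 - p)) with (1 - (1 - e) * p) by ring.
    replace (e + (1 - e) * (1 - q)) with (1 - (1 - e) * q) by ring.
    field. lra.
  - apply (cont_neg _ _ HT). intros p q Hp Hq. unfold T_U, C_U, DU.
    replace (1 - (1 - e + (1 - (1 - e)) * p)) with (e * (1 - p)) by ring.
    replace (1 - (1 - e + (1 - (1 - e)) * q)) with (e * (1 - q)) by ring.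
    field. lra.
Qed.

Lemma dual_idem U p : idempotent U p -> idempotent (DU U) (1 - p).
Proof.
  intros [Ip Hp]. split; [apply I01n; auto|]. unfold DU.
  replace (1 - (1 - p)) with p by ring. rewrite Hp. ring.
Qed.

Lemma dual_sec U x y : ~ sec_continuous_at U x y -> ~ sec_continuous_at (DU U) (1 - x) (1 - y).
Proof.
  intros Hn Hc. apply Hn. intros eps Heps. destruct (Hc eps Heps) as [d [Hd Hd']].
  exists d. split; auto. intros t [Ht Htd]. simpl in *. unfold R_dist in *.
  assert (Hdt : R_dist (1 - t) (1 - y) < d).
  { unfold R_dist. replace (1 - t - (1 - y)) with (- (t - y)) by ring. rewrite Rabs_Ropp; auto. }
  specialize (Hd' (1 - t) (conj (I01n t Ht) Hdt)). simpl in Hd'. unfold R_dist in Hd'.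
  unfold DU in Hd'. replace (1 - (1 - x)) with x in Hd' by ring.
  replace (1 - (1 - t)) with t in Hd' by ring. replace (1 - (1 - y)) with y in Hd' by ring.
  replace (1 - U x t - (1 - U x y)) with (- (U x t - U x y)) in Hd' by ring.
  rewrite Rabs_Ropp in Hd'. exact Hd'.
Qed.

Theorem lemma10 (U : R -> R -> R) (e a b : R) :
  0 < e < 1 ->
  uninorm U e ->
  in_class_U U e ->
  idempotent U a -> idempotent U b -> a < b ->
  (forall c, a < c < b -> ~ idempotent U c) ->
  (exists y x1 x2, I01 y /\ a < x1 < b /\ a < x2 < b /\ x1 < x2 /\
     ~ sec_continuous_at U x1 y /\ ~ sec_continuous_at U x2 y) ->
  forall x z, a <= x <= b -> I01 z ->
    ((x <= e /\ e <= z) \/ (e <= x /\ z <= e)) ->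
    U x z = x \/ U x z = z.
Proof.
  intros He Hu Hc Ha Hb Hab Hno Hex x z Hx Hz Hr.
  destruct (Rle_dec b e) as [Hbe|Hbe].
  - apply (concT U e a b); auto.
  - assert (Hea : e <= a).
    { destruct (Rle_dec e a) as [H|H]; auto. exfalso. apply (Hno e); [lra|].
      split; [unfold I01; lra|]. destruct Hu as [_ [_ [_ [_ [_ Hn]]]]]. apply Hn. unfold I01; lra. }
    destruct Hex as [y [x1 [x2 [Hy [H1 [H2 [H12 [Hd1 Hd2]]]]]]]].
    assert (Hd := concT (DU U) (1 - e) (1 - b) (1 - a) ltac:(lra) (dual_uni U e Hu) (dual_cls U e He Hc)
      (dual_idem U b Hb) (dual_idem U a Ha) ltac:(lra)).
    assert (Hno' : forall c, 1 - b < c < 1 - a -> ~ idempotent (DU U) c).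
    { intros c Hc' Hi. apply (Hno (1 - c)); [lra|].
      pose proof (dual_idem (DU U) c Hi) as Hi'. destruct Hi' as [Hi1 Hi2]. split; auto.
      unfold DU in Hi2. replace (1 - (1 - c)) with c in Hi2 by ring.
      replace (1 - (1 - U (1 - c) (1 - c))) with (U (1 - c) (1 - c)) in Hi2 by ring. exact Hi2. }
    specialize (Hd Hno' ltac:(lra)).
    assert (Hex' : exists y x1 x2, I01 y /\ 1 - b < x1 < 1 - a /\ 1 - b < x2 < 1 - a /\ x1 < x2 /\
      ~ sec_continuous_at (DU U) x1 y /\ ~ sec_continuous_at (DU U) x2 y).
    { exists (1 - y), (1 - x2), (1 - x1). split; [apply I01n; auto|].
      split; [lra|split; [lra|split; [lra|split; apply dual_sec; auto]]]. }
    specialize (Hd Hex' (1 - x) (1 - z) ltac:(lra) (I01n z Hz) ltac:(lra)).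
    unfold DU in Hd. replace (1 - (1 - x)) with x in Hd by ring. replace (1 - (1 - z)) with z in Hd by ring.
    lra.
Qed.
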